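(* For every positive integer $n$: (a) $\displaystyle\sum_{k=1}^{n}N^p(k)\,\omega(n-k)=\tau(n)$; (b) $\displaystyle\sum_{k=1}^{n}(-1)^{n-k}N^q(k)\,o(n-k)=\tau^s(n)$.
   Context: $N^p(n)$ (resp. $N^q(n)$) is the total number of parts, summed over all partitions (resp. partitions into pairwise distinct parts) of $n$. $\omega(m)=1$ if $m=0$, $\omega(m)=(-1)^k$ if $m=\frac{3k^2\pm k}{2}$ for an integer $k\ge1$, and $\omega(m)=0$ otherwise. $o(m)$ is the number of partitions of $m$ into distinct odd parts, with $o(0)=1$. $\tau(m)$ is the number of positive divisors of $m$ and $\tau^s(m)=\sum_{d\mid m,\,d\ge1}(-1)^{m/d-1}$. *)

(* Defs.v *)
From mathcomp Require Import all_boot all_algebra.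
Set Implicit Arguments. Unset Strict Implicit. Unset Printing Implicit Defensive.
Import GRing.Theory Num.Theory.

(* A partition of n is encoded by its multiplicity function:
   m i = number of parts equal to i (1 <= i <= n); index 0 is unused (m 0 = 0).
   Multiplicities are at most n, so 'I_n.+1 suffices as codomain. *)
Definition mult_fun n := {ffun 'I_n.+1 -> 'I_n.+1}.

Definition is_partition n (m : mult_fun n) : bool :=
  (m ord0 == ord0) && (\sum_(i < n.+1) i * m i == n)%N.

Definition is_distinct_partition n (m : mult_fun n) : bool :=
  @is_partition n m && [forall i, m i <= 1]%N.

Definition is_distinct_odd_partition n (m : mult_fun n) : bool :=
  @is_distinct_partition n m && [forall i, (m i != ord0) ==> odd i].

Definition nparts n (m : mult_fun n) : nat := (\sum_(i < n.+1) m i)%N.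

Definition Np (n : nat) : nat := (\sum_(m : mult_fun n | @is_partition n m) @nparts n m)%N.

Definition Nq (n : nat) : nat :=
  (\sum_(m : mult_fun n | @is_distinct_partition n m) @nparts n m)%N.

Definition o (n : nat) : nat := #|[pred m : mult_fun n | @is_distinct_odd_partition n m]|.

(* omega(m) = 1 if m = 0, (-1)^k if m = (3k^2 +- k)/2 with k >= 1, 0 otherwise.
   Any such k satisfies k <= m, so searching k in 'I_m.+1 is exhaustive. *)
Definition omega (m : nat) : int :=
  if m == 0%N then 1%R else
  match [pick k : 'I_m.+1 | (0 < k)%N &&
           ((m.*2 == 3 * k * k + k) || (m.*2 == 3 * k * k - k))%N] with
  | Some k => ((-1) ^+ k)%R
  | None => 0%R
  end.

Definition tau (m : nat) : nat := size (divisors m).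

Definition taus (m : nat) : int := (\sum_(d <- divisors m) (-1) ^+ (m %/ d).-1)%R.

(* Main.v *)
Require Import Defs.
From mathcomp Require Import all_boot all_algebra.
From mathcomp Require Import ring zify.
Import GRing.Theory Num.Theory.
Local Open Scope ring_scope.

Definition eqt (N : nat) (p q : {poly int}) := forall i, (i <= N)%N -> p`_i = q`_i.

Lemma eqt_refl N p : eqt N p p. Proof. by []. Qed.
Lemma eqt_sym N p q : eqt N p q -> eqt N q p. Proof. by move=> h i hi; rewrite h. Qed.
Lemma eqt_trans N p q r : eqt N p q -> eqt N q r -> eqt N p r.
Proof. by move=> h1 h2 i hi; rewrite h1 // h2. Qed.
Lemma eqt_le N N' p q : (N' <= N)%N -> eqt N p q -> eqt N' p q.
Proof. by move=> le h i hi; apply: h; apply: leq_trans le. Qed.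
Lemma eqtD N p q p' q' : eqt N p p' -> eqt N q q' -> eqt N (p + q) (p' + q').
Proof. by move=> h1 h2 i hi; rewrite !coefD h1 // h2. Qed.
Lemma eqtN N p q : eqt N p q -> eqt N (- p) (- q).
Proof. by move=> h i hi; rewrite !coefN h. Qed.
Lemma eqtM N p q p' q' : eqt N p p' -> eqt N q q' -> eqt N (p * q) (p' * q').
Proof.
move=> h1 h2 i hi; rewrite !coefM; apply: eq_bigr => j _.
rewrite h1 ?h2 //; first by apply: leq_trans (leq_subr _ _) hi.
by apply: leq_trans hi; rewrite -ltnS.
Qed.
Lemma eqt_prod N (I : Type) (r : seq I) (P : pred I) (F G : I -> {poly int}) :
  (forall i, P i -> eqt N (F i) (G i)) ->
  eqt N (\prod_(i <- r | P i) F i) (\prod_(i <- r | P i) G i).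
Proof. move=> h; apply: (big_ind2 (eqt N)) => // a b c d; exact: eqtM. Qed.
Lemma eqt_sum N (I : Type) (r : seq I) (P : pred I) (F G : I -> {poly int}) :
  (forall i, P i -> eqt N (F i) (G i)) ->
  eqt N (\sum_(i <- r | P i) F i) (\sum_(i <- r | P i) G i).
Proof. move=> h; apply: (big_ind2 (eqt N)) => // a b c d; exact: eqtD. Qed.
Lemma eqt_XnM N e p : (N < e)%N -> eqt N ('X^e * p) 0.
Proof.
move=> he i hi; rewrite coefXnM coef0 ifT //; exact: leq_ltn_trans hi he.
Qed.
Lemma eqt_prod1 N (I : Type) (r : seq I) (P : pred I) (F : I -> {poly int}) :
  (forall i, P i -> eqt N (F i) 1) -> eqt N (\prod_(i <- r | P i) F i) 1.
Proof. move=> h; apply: (@eqt_trans _ _ (\prod_(i <- r | P i) 1)); first exact: eqt_prod. by rewrite big1_eq. Qed.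

Lemma test (x y : int) (n : nat) : (x + y) * (x - y) *+ n = (x * x - y*y) * n%:R.
Proof. ring. Qed.

Definition gprod (M : nat) (c : nat -> nat -> int) : {poly int} :=
  \prod_(i < M.+1) \sum_(j < M.+1) c i j *: 'X^(i * j).

Lemma gprod_coef M c k : (gprod M c)`_k =
  \sum_(f : mult_fun M | (\sum_(i < M.+1) i * f i)%N == k) \prod_(i < M.+1) c i (f i).
Proof.
rewrite /gprod bigA_distr_bigA coef_sum [RHS]big_mkcond /=.
apply: eq_bigr => f _.
have -> : \prod_(i < M.+1) (c i (f i) *: 'X^(i * f i)) =
   (\prod_(i < M.+1) c i (f i)) *: 'X^(\sum_(i < M.+1) i * f i).
  rewrite -mul_polyC rmorph_prod -prodrXr -big_split /=.
  by apply: eq_bigr => i _; rewrite mul_polyC.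
rewrite coefZ coefXn eq_sym; case: eqP => _; by rewrite ?mulr1 ?mulr0.
Qed.

Definition F M (c : nat -> nat -> int) (i : nat) : {poly int} :=
  \sum_(j < M.+1) c i j *: 'X^(i * j).

Definition c0 (i j : nat) : int := ((i != 0)%N || (j == 0)%N)%:R.
Definition cw (i0 : nat) (i j : nat) : int := c0 i j * (if i == i0 then j%:R else 1).
Definition c1 (i j : nat) : int := (((i != 0)%N || (j == 0)%N) && (j <= 1)%N)%:R.
Definition c1w (i0 : nat) (i j : nat) : int := c1 i j * (if i == i0 then j%:R else 1).
Definition co (i j : nat) : int :=
  ((((i != 0)%N || (j == 0)%N) && (j <= 1)%N) && ((j != 0)%N ==> odd i))%:R * (-1) ^+ (i * j).

Lemma prod_boolR (T : finType) (B : pred T) :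
  \prod_(i : T) ((B i)%:R : int) = [forall i, B i]%:R.
Proof.
case: (boolP [forall i, B i]) => [/forallP h | /forallPn [i hi]].
  by rewrite big1 // => i _; rewrite h.
by rewrite (bigD1 i) //= (negbTE hi) mul0r.
Qed.

Lemma prod_sel M (i0 : 'I_M.+1) (g : 'I_M.+1 -> int) :
  \prod_(i < M.+1) (if (i == i0 :> nat) then g i else 1) = g i0.
Proof.
rewrite (bigD1 i0) //= eqxx big1 ?mulr1 // => i hi.
by rewrite ifF //; apply/negbTE.
Qed.

Lemma forall0 M (f : mult_fun M) :
  [forall i : 'I_M.+1, (i != 0%N :> nat) || (f i == 0%N :> nat)] = (f ord0 == ord0).
Proof.
apply/forallP/eqP => [h | h i].
  by have := h ord0; rewrite eqxx /= => /eqP e; apply: val_inj.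
have [e|ne] := eqVneq (i : nat) 0%N; last by apply/orP; left.
have -> : i = ord0 by apply: val_inj.
by rewrite h.
Qed.

Lemma Np_gprod k : (Np k)%:Z = \sum_(i0 < k.+1) (gprod k (cw i0))`_k.
Proof.
rewrite /Np -natz natr_sum.
under eq_bigr do rewrite /nparts natr_sum.
rewrite exchange_big /=; apply: eq_bigr => i0 _.
rewrite gprod_coef big_mkcond [RHS]big_mkcond; apply: eq_bigr => f _.
rewrite /cw big_split /=.
rewrite prod_sel /c0 (@prod_boolR _ (fun i : 'I_k.+1 => (i != 0%N :> nat) || (f i == 0%N :> nat))).
rewrite forall0 /is_partition.
by case: (f ord0 == ord0); case: (_ == k)%N; rewrite ?mul1r ?mul0r.
Qed.

Lemma forall_andb (T : finType) (A B : pred T) :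
  [forall i, A i && B i] = [forall i, A i] && [forall i, B i].
Proof.
apply/forallP/andP => [h | [/forallP h1 /forallP h2] i].
  by split; apply/forallP => i; have /andP[] := h i.
by rewrite h1 h2.
Qed.

Lemma Nq_gprod k : (Nq k)%:Z = \sum_(i0 < k.+1) (gprod k (c1w i0))`_k.
Proof.
rewrite /Nq -natz natr_sum.
under eq_bigr do rewrite /nparts natr_sum.
rewrite exchange_big /=; apply: eq_bigr => i0 _.
rewrite gprod_coef big_mkcond [RHS]big_mkcond; apply: eq_bigr => f _.
rewrite /c1w big_split /= prod_sel /c1.
rewrite (@prod_boolR _ (fun i : 'I_k.+1 => ((i != 0%N :> nat) || (f i == 0%N :> nat)) && (f i <= 1)%N)).
rewrite forall_andb forall0 /is_distinct_partition /is_partition.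
by case: (f ord0 == ord0); case: (_ == k)%N; case: [forall i, _]; rewrite ?mul1r ?mul0r.
Qed.

Lemma o_gprod m : (gprod m co)`_m = (-1) ^+ m * (o m)%:Z.
Proof.
rewrite /o -sum1_card -natz natr_sum mulr_sumr gprod_coef.
rewrite big_mkcond [RHS]big_mkcond; apply: eq_bigr => f _.
rewrite /co big_split /= prodrXr.
rewrite (@prod_boolR _ (fun i : 'I_m.+1 => (((i != 0%N :> nat) || (f i == 0%N :> nat)) && (f i <= 1)%N) && ((f i != 0%N :> nat) ==> odd i))).
rewrite !forall_andb forall0 inE /is_distinct_odd_partition /is_distinct_partition /is_partition.
case: eqP => [->|]; last by case: (f ord0 == ord0).
by case: (f ord0 == ord0); case: [forall i, _ <= _]%N; case: [forall i, _ ==> _]; rewrite ?mul1r ?mul0r ?mulr1.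
Qed.

Lemma gprodE M c : gprod M c = \prod_(i < M.+1) F M c i.
Proof. by []. Qed.

Lemma coefF M c i t : (F M c i)`_t = \sum_(j < M.+1) c i j * (t == i * j)%N%:R.
Proof. by rewrite /F coef_sum; apply: eq_bigr => j _; rewrite coefZ coefXn. Qed.

Lemma F_level M M' c i : (M <= M')%N -> (forall j, (0 < j)%N -> c 0%N j = 0) ->
  eqt M (F M' c i) (F M c i).
Proof.
move=> le hc t ht; rewrite !coefF.
rewrite [RHS](big_ord_widen M'.+1 (fun j => c i j * (t == i * j)%N%:R)) //.
rewrite [RHS]big_mkcond; apply: eq_bigr => j _ /=.
case: ifP => // hj.
have [->|ip] := posnP i; first by rewrite hc ?mul0r //; lia.
suff -> : (t == i * j)%N = false by rewrite mulr0.
apply/negbTE; apply/eqP => e.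
have : (j <= i * j)%N by rewrite leq_pmull.
lia.
Qed.

Lemma F_big M c i : (M < i)%N -> (forall i, (0 < i)%N -> c i 0%N = 1) ->
  eqt M (F M c i) 1.
Proof.
move=> hi hc t ht; rewrite coefF coef1 big_ord_recl /= muln0 hc; last by lia.
rewrite mul1r big1 ?addr0 // => j _.
suff -> : (t == i * bump 0 j)%N = false by rewrite mulr0.
apply/negbTE; apply/eqP => e.
have : (i <= i * bump 0 j)%N by rewrite leq_pmulr.
lia.
Qed.

Lemma gprod_level M M' c : (M <= M')%N ->
  (forall j, (0 < j)%N -> c 0%N j = 0) -> (forall i, (0 < i)%N -> c i 0%N = 1) ->
  eqt M (gprod M c) (gprod M' c).
Proof.
move=> le h0 h1; apply: eqt_sym; rewrite !gprodE.
apply: (@eqt_trans _ _ (\prod_(i < M'.+1) F M c i)).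
  by apply: eqt_prod => i _; apply: F_level.
apply: (@eqt_trans _ _ (\prod_(i < M'.+1) (if (i < M.+1)%N then F M c i else 1))).
  apply: eqt_prod => i _; case: ifP => hi //; apply: F_big => //; lia.
rewrite -big_mkcond -(big_ord_widen M'.+1 (F M c)) //; lia.
Qed.

Lemma geo_id (R : comRingType) (y : R) K :
  (\sum_(j < K.+1) y ^+ j) * (1 - y) = 1 - y ^+ K.+1.
Proof.
have := subrX1 y K.+1; move=> h.
by rewrite -[1 - y]opprB mulrN mulrC -h opprB.
Qed.

Lemma U_id (R : comRingType) (y : R) K :
  (\sum_(j < K.+1) j%:R * y ^+ j) * (1 - y) =
  \sum_(j < K) y ^+ j.+1 - K%:R * y ^+ K.+1.
Proof.
elim: K => [|K IH]; first by rewrite big_ord1 big_ord0 /=; ring.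
rewrite big_ord_recr /= mulrDl IH big_ord_recr /= !exprS.
rewrite -[(K.+1)%:R]natr1 /=; ring.
Qed.

Lemma Us_id (R : comRingType) (y : R) K :
  (1 + y) * \sum_(j < K) (-1) ^+ j * y ^+ j.+1 = y - (-1) ^+ K * y ^+ K.+1.
Proof.
elim: K => [|K IH]; first by rewrite big_ord0 /=; ring.
by rewrite big_ord_recr /= mulrDr IH !exprS; ring.
Qed.

Lemma eqt_X N e : (N < e)%N -> eqt N ('X^e) 0.
Proof. by move=> h; rewrite -[X in eqt _ X _]mulr1; apply: eqt_XnM. Qed.

Lemma eqt_geo N e K : (0 < e)%N -> (N < e * K.+1)%N ->
  eqt N ((\sum_(j < K.+1) ('X^e) ^+ j) * (1 - 'X^e)) 1.
Proof.
move=> he hN; rewrite geo_id -exprM.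
rewrite -[X in eqt _ _ X]subr0; apply: eqtD => //; apply: eqtN; exact: eqt_X.
Qed.

Lemma gprod_weight M c c' (i0 : 'I_M.+1) V :
  (forall i j, i != (i0 : nat) -> c' i j = c i j) ->
  eqt M (F M c' i0) (F M c i0 * V) -> eqt M (gprod M c') (gprod M c * V).
Proof.
move=> hc h; rewrite !gprodE [X in eqt _ X _](bigD1 i0) //= [X in eqt _ _ (X * _)](bigD1 i0) //=.
rewrite -mulrA [_ * V]mulrC mulrA.
apply: eqtM => //.
have -> : \prod_(i < M.+1 | i != i0) F M c' i = \prod_(i < M.+1 | i != i0) F M c i.
  apply: eq_bigr => i hi; rewrite /F; apply: eq_bigr => j _; rewrite hc //.
by [].
Qed.

Definition Vv M (g : nat -> int) (i : nat) : {poly int} :=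
  \sum_(j < M) (((i != 0)%N)%:R * g j) *: 'X^(i * j.+1).
Definition TT M (g : nat -> int) : {poly int} := \sum_(i < M.+1) Vv M g i.

Lemma F_c0 M i : (0 < i)%N -> F M c0 i = \sum_(j < M.+1) ('X^i) ^+ j.
Proof.
move=> hi; rewrite /F; apply: eq_bigr => j _; rewrite /c0 -exprM.
have -> : (i != 0)%N = true by lia.
by rewrite /= scale1r.
Qed.

Lemma F_cw M i : (0 < i)%N -> F M (cw i) i = \sum_(j < M.+1) j%:R * ('X^i) ^+ j.
Proof.
move=> hi; rewrite /F; apply: eq_bigr => j _; rewrite /cw /c0 -exprM eqxx.
have -> : (i != 0)%N = true by lia.
by rewrite orTb mul1r scaler_nat mulr_natl.
Qed.

Lemma Vv_1 M i : (0 < i)%N -> Vv M (fun _ => 1) i = \sum_(j < M) ('X^i) ^+ j.+1.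
Proof.
move=> hi; rewrite /Vv; apply: eq_bigr => j _; rewrite -exprM.
have -> : (i != 0)%N = true by lia.
by rewrite /= mulr1 scale1r.
Qed.

Lemma Vv_0 M g : Vv M g 0 = 0.
Proof. by rewrite /Vv big1 // => j _; rewrite /= mul0r scale0r. Qed.

Lemma A_factor M (i0 : 'I_M.+1) :
  eqt M (F M (cw i0) i0) (F M c0 i0 * Vv M (fun _ => 1) i0).
Proof.
have [e|hi] := posnP i0.
  rewrite e Vv_0 mulr0 /F big1 // => j _.
  by rewrite /cw /c0 /=; case: (j : nat) => [|j'] /=; rewrite ?mul0r ?mulr0 ?scale0r.
rewrite F_cw // F_c0 // Vv_1 //.
set y := 'X^i0.
apply: (@eqt_trans _ _ ((\sum_(j < M.+1) j%:R * y ^+ j) * ((\sum_(j < M.+1) y ^+ j) * (1 - y)))).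
  rewrite -[X in eqt _ X _]mulr1; apply: eqtM => //; apply: eqt_sym; apply: eqt_geo => //; exact: leq_pmull.
rewrite mulrCA U_id; apply: eqtM => //.
rewrite -[X in eqt _ _ X]subr0; apply: eqtD => //; apply: eqtN.
by rewrite mulrC -exprM; apply: eqt_XnM; exact: leq_pmull.
Qed.

Lemma A_eq M : eqt M (\sum_(i0 < M.+1) gprod M (cw i0)) (gprod M c0 * TT M (fun _ => 1)).
Proof.
rewrite /TT mulr_sumr; apply: eqt_sum => i0 _; apply: gprod_weight => [i j hi|].
  by rewrite /cw (negbTE hi) mulr1.
exact: A_factor.
Qed.

Lemma F_c1 M i : (0 < i)%N -> (i <= M)%N -> F M c1 i = 1 + 'X^i.
Proof.
move=> hi hM; case: M hM => [|M] hM; first by lia.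
rewrite /F big_ord_recl big_ord_recl big1; last first.
  by move=> j _; rewrite /c1 /= andbF scale0r.
rewrite /c1 /bump /=.
have -> : (i != 0)%N = true by lia.
rewrite !orTb /= addr0 muln0 expr0 scale1r. have -> : bump 0 0 = 1%N by []. by rewrite muln1 scale1r.
Qed.

Lemma F_c1w M i : (0 < i)%N -> (i <= M)%N -> F M (c1w i) i = 'X^i.
Proof.
move=> hi hM; case: M hM => [|M] hM; first by lia.
rewrite /F big_ord_recl big_ord_recl big1; last first.
  by move=> j _; rewrite /c1w /c1 /= andbF mul0r scale0r.
rewrite /c1w /c1 /=.
have -> : bump 0 0 = 1%N by [].
have -> : (i != 0)%N = true by lia.
by rewrite /= eqxx addr0 muln0 muln1 mulr0 scale0r add0r mulr1 scale1r.
Qed.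

Lemma Vv_s M i : (0 < i)%N ->
  Vv M (fun j => (-1) ^+ j) i = \sum_(j < M) (-1) ^+ j * ('X^i) ^+ j.+1.
Proof.
move=> hi; rewrite /Vv; apply: eq_bigr => j _; rewrite -exprM.
have -> : (i != 0)%N = true by lia.
by rewrite /= mul1r -mul_polyC rmorphXn rmorphN1.
Qed.

Lemma B_factor M (i0 : 'I_M.+1) :
  eqt M (F M (c1w i0) i0) (F M c1 i0 * Vv M (fun j => (-1) ^+ j) i0).
Proof.
have [e|hi] := posnP i0.
  rewrite e Vv_0 mulr0 /F big1 // => j _.
  by rewrite /c1w /c1 /=; case: (j : nat) => [|j'] /=; rewrite ?mul0r ?mulr0 ?scale0r.
have hM : (i0 <= M)%N by rewrite -ltnS.
rewrite F_c1w // F_c1 // Vv_s // Us_id.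
rewrite -[X in eqt _ X _]subr0; apply: eqtD => //; apply: eqtN.
by apply: eqt_sym; rewrite mulrC -exprM; apply: eqt_XnM; exact: leq_pmull.
Qed.

Lemma B_eq M : eqt M (\sum_(i0 < M.+1) gprod M (c1w i0))
  (gprod M c1 * TT M (fun j => (-1) ^+ j)).
Proof.
rewrite /TT mulr_sumr; apply: eqt_sum => i0 _; apply: gprod_weight => [i j hi|].
  by rewrite /c1w (negbTE hi) mulr1.
exact: B_factor.
Qed.

Lemma F_co M i : (0 < i)%N -> (i <= M)%N -> F M co i = 1 - (odd i)%:R *: 'X^i.
Proof.
move=> hi hM; case: M hM => [|M] hM; first by lia.
rewrite /F big_ord_recl big_ord_recl big1; last first.
  by move=> j _; rewrite /co /= andbF mul0r scale0r.
rewrite /co /bump /=.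
have -> : (i != 0)%N = true by lia.
rewrite muln0 muln1 !expr0 mulr1 scale1r.
case: (boolP (odd i)) => ho /=.
  by rewrite addr0 mul1r -signr_odd ho expr1 scaleN1r scale1r.
by rewrite addr0 mul0r !scale0r subr0 addr0.
Qed.

Lemma sum_divisors (t M : nat) (G : nat -> int) : (0 < t)%N -> (t <= M)%N ->
  \sum_(d <- divisors t) G d = \sum_(i < M.+1 | (i %| t)%N) G i.
Proof.
move=> t0 tM.
rewrite -(big_mkord (fun i => (i %| t)%N)) -big_filter.
apply: perm_big; apply: uniq_perm.
- exact: divisors_uniq.
- by apply: filter_uniq; apply: iota_uniq.
move=> d; rewrite mem_filter mem_iota -dvdn_divisors //.
case: (boolP (d %| t)%N) => //= hd.
have := dvdn_leq t0 hd; lia.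
Qed.

Lemma inner_coef M (g : nat -> int) i t : (0 < t)%N -> (t <= M)%N ->
  \sum_(j < M) (((i != 0)%N)%:R * g j) * (t == i * j.+1)%N%:R =
  if (i %| t)%N then g (t %/ i).-1 else 0.
Proof.
move=> t0 tM.
have [->|ip] := posnP i.
  rewrite dvd0n ifF; last by lia.
  by rewrite big1 // => j _; rewrite /= !mul0r.

case: (boolP (i %| t)%N) => hd; last first.
  rewrite big1 // => j _.
  suff -> : (t == i * j.+1)%N = false by rewrite mulr0.
  apply/negbTE; apply: contra hd => /eqP ->; exact: dvdn_mulr.
have [q tq] : exists q, t = (q * i)%N by exists (t %/ i)%N; rewrite divnK.
have qi : (t %/ i = q)%N by rewrite tq mulnK.
rewrite qi.
have qpos : (0 < q)%N by move: t0; rewrite tq; case: q {tq qi} => //.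
have qM : (q.-1 < M)%N.
  have : (q <= t)%N by rewrite tq leq_pmulr.
  lia.
rewrite (bigD1 (Ordinal qM)) //= big1.
  have -> : (t == i * q.-1.+1)%N = true by apply/eqP; rewrite prednK // tq mulnC.
  by rewrite addr0 /= mul1r mulr1.
move=> j hj.
suff -> : (t == i * j.+1)%N = false by rewrite mulr0.
apply/negbTE; apply: contra hj => /eqP e.
apply/eqP; apply: val_inj => /=.
rewrite tq mulnC in e.
have := eqn_pmul2l ip; move=> h.
move/eqP: e; rewrite h => /eqP e; lia.
Qed.

Lemma TT_coef M g t : (0 < t)%N -> (t <= M)%N ->
  (TT M g)`_t = \sum_(d <- divisors t) g (t %/ d).-1.
Proof.
move=> t0 tM.
rewrite (@sum_divisors t M (fun d => g (t %/ d)%N.-1) t0 tM) /TT coef_sum [RHS]big_mkcond /=.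
apply: eq_bigr => i _.
rewrite /Vv coef_sum.
under eq_bigr do rewrite coefZ coefXn.
by rewrite inner_coef.
Qed.

Lemma TT_coef0 M g : (TT M g)`_0 = 0.
Proof.
rewrite /TT coef_sum big1 // => i _; rewrite /Vv coef_sum big1 // => j _.
rewrite coefZ coefXn.
have [->|ip] := posnP i; first by rewrite /= !mul0r.
suff -> : (0 == i * j.+1)%N = false by rewrite mulr0.
by apply/negbTE; rewrite eq_sym -lt0n muln_gt0 ip.
Qed.

Lemma TT_level M M' g : (M <= M')%N -> eqt M (TT M g) (TT M' g).
Proof.
move=> le t ht.
have [->|t0] := posnP t; first by rewrite !TT_coef0.
rewrite !TT_coef //; lia.
Qed.

Definition E M : {poly int} := \prod_(i < M) (1 - 'X^(i.+1)).

Lemma F_0 M c : c 0%N 0%N = 1 -> (forall j, (0 < j)%N -> c 0%N j = 0) -> F M c 0 = 1.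
Proof.
move=> h0 h1; rewrite /F big_ord_recl big1 ?addr0 /=.
  by rewrite h0 scale1r.
by move=> j _; rewrite h1 ?scale0r.
Qed.

Lemma gprod_range M c : c 0%N 0%N = 1 -> (forall j, (0 < j)%N -> c 0%N j = 0) ->
  gprod M c = \prod_(i < M) F M c i.+1.
Proof. by move=> h0 h1; rewrite gprodE big_ord_recl F_0 // mul1r. Qed.

Lemma PE M : eqt M (gprod M c0 * E M) 1.
Proof.
rewrite gprod_range // /E.
have -> : \prod_(i < M) F M c0 i.+1 * \prod_(i < M) (1 - 'X^(i.+1)) =
  \prod_(i < M) (F M c0 i.+1 * (1 - 'X^(i.+1))) by rewrite big_split.
apply: eqt_prod1 => i _; rewrite F_c0 //; apply: eqt_geo => //.
exact: leq_pmull.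
by move=> j hj; rewrite /c0 /=; have -> : (j == 0)%N = false by lia.
Qed.

Lemma Hodd L : \prod_(i < L.*2) (1 - (odd i.+1)%:R *: ('X^(i.+1) : {poly int})) =
  \prod_(i < L) (1 - 'X^((i.*2).+1)).
Proof.
elim: L => [|L IH]; first by rewrite !big_ord0.
rewrite doubleS !big_ord_recr /= IH odd_double /= scale1r scale0r subr0 mulr1.
by [].
Qed.

Lemma Esplit L : E L.*2 =
  \prod_(i < L) (1 - 'X^((i.*2).+1)) * \prod_(i < L) (1 - 'X^((i.+1).*2)).
Proof.
rewrite /E; elim: L => [|L IH]; first by rewrite !big_ord0 mulr1.
rewrite doubleS !big_ord_recr /= IH.
rewrite -!mulrA; congr (_ * _); rewrite mulrCA; congr (_ * _).
Qed.

Lemma DE K : \prod_(i < K) (1 + 'X^(i.+1)) * E K =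
  \prod_(i < K) (1 - ('X^((i.+1).*2)) : {poly int}).
Proof.
rewrite /E -big_split /=; apply: eq_bigr => i _.
by rewrite -muln2 exprM; ring.
Qed.

Lemma trunc_half L : eqt L.*2 (\prod_(i < L.*2) (1 - ('X^((i.+1).*2)) : {poly int}))
  (\prod_(i < L) (1 - 'X^((i.+1).*2))).
Proof.
apply: (@eqt_trans _ _ (\prod_(i < L.*2) (if (i < L)%N then (1 - 'X^((i.+1).*2)) else 1))).
  apply: eqt_prod => i _; case: ifP => hi //.
  rewrite -[X in eqt _ _ X]subr0; apply: eqtD => //; apply: eqtN; apply: eqt_X; lia.
rewrite -big_mkcond -(big_ord_widen L.*2 (fun i => 1 - 'X^((i.+1).*2))) //; lia.
Qed.

Lemma DH2 L : eqt L.*2 (\prod_(i < L.*2) (1 + 'X^(i.+1)) * \prod_(i < L) (1 - 'X^((i.*2).+1))) 1.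
Proof.
set D2 := \prod_(i < L.*2) _.
set Od := \prod_(i < L) _.
set Ev := \prod_(i < L) (1 - ('X^((i.+1).*2)) : {poly int}).
set Inv := \prod_(i < L) \sum_(j < (L.*2).+1) ('X^((i.+1).*2) : {poly int}) ^+ j.
have EI : eqt L.*2 (Ev * Inv) 1.
  rewrite /Ev /Inv -big_split /=; apply: eqt_prod1 => i _.
  rewrite mulrC; apply: eqt_geo; first by lia.
  by apply: leq_pmull; lia.
apply: (@eqt_trans _ _ (D2 * Od * (Ev * Inv))).
  by rewrite -[X in eqt _ X _]mulr1; apply: eqtM => //; apply: eqt_sym.
have -> : D2 * Od * (Ev * Inv) = (D2 * E L.*2) * Inv.
  by rewrite Esplit -/Od -/Ev; ring.
apply: eqt_trans EI; apply: eqtM => //.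
rewrite DE; exact: trunc_half.
Qed.

Lemma DH n : eqt n (gprod n c1 * gprod n co) 1.
Proof.
have hc1 : forall j, (0 < j)%N -> c1 0%N j = 0.
  by move=> j hj; rewrite /c1 /=; have -> : (j == 0)%N = false by lia.
have hc1' : forall i, (0 < i)%N -> c1 i 0%N = 1 by move=> i hi; rewrite /c1 orbT.
have hco : forall j, (0 < j)%N -> co 0%N j = 0.
  by move=> j hj; rewrite /co /=; have -> : (j == 0)%N = false by lia.
have hco' : forall i, (0 < i)%N -> co i 0%N = 1.
  by move=> i hi; rewrite /co orbT /= muln0 expr0 mulr1.
apply: (@eqt_trans _ _ (gprod n.*2 c1 * gprod n.*2 co)).
  apply: eqtM; apply: gprod_level => //; lia.
apply: (@eqt_le n.*2); first by lia.
have g1 : c1 0%N 0%N = 1 by [].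
have g2 : co 0%N 0%N = 1 by rewrite /co /= expr0 mulr1.
rewrite (gprod_range _ _ g1 hc1) (gprod_range _ _ g2 hco).
have -> : \prod_(i < n.*2) F n.*2 c1 i.+1 = \prod_(i < n.*2) (1 + 'X^(i.+1)).
  by apply: eq_bigr => i _; rewrite F_c1.
have -> : \prod_(i < n.*2) F n.*2 co i.+1 =
    \prod_(i < n.*2) (1 - (odd i.+1)%:R *: 'X^(i.+1)).
  by apply: eq_bigr => i _; rewrite F_co.
rewrite Hodd; exact: DH2.
Qed.

Fixpoint tri (k : nat) : nat := if k is k'.+1 then (tri k' + k)%N else 0%N.

Lemma tri2 k : (tri k * 2 = k * k + k)%N.
Proof. elim: k => [|k IH] //=; nia. Qed.

Definition Q n k : {poly int} := \prod_(k <= i < n) (1 - 'X^(i.+1)).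
Definition Tm n k : {poly int} := (-1) ^+ k * 'X^(n * k + tri k) * Q n k.
Definition S n : {poly int} := \sum_(k < n.+1) Tm n k.
Definition V n : {poly int} := 1 + \sum_(j < n)
   (-1) ^+ j.+1 * ('X^(j.+1 * j.+1 + tri j.+1) + 'X^(j.+1 * j.+1 + tri j)).

Lemma Q_nn n : Q n n = 1.
Proof. by rewrite /Q big_geq. Qed.

Lemma Q_succ n k : (k <= n)%N -> Q n.+1 k = Q n k * (1 - 'X^(n.+1)).
Proof. by move=> h; rewrite /Q big_nat_recr. Qed.

Lemma Q_low n k : (k < n)%N -> Q n k = (1 - 'X^(k.+1)) * Q n k.+1.
Proof. by move=> h; rewrite /Q big_ltn. Qed.

Definition dd n k : {poly int} := (-1) ^+ k.+1 * 'X^(n.+1 * k.+1 + tri k) * Q n k.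

Lemma tele n m : (m <= n)%N ->
  \sum_(k < m.+1) (Tm n.+1 k - Tm n k) = dd n m.
Proof.
elim: m => [|m IH] hm.
  rewrite big_ord1 /Tm /dd Q_succ // /= !muln0 !muln1 !addn0 !expr0 !mul1r.
  by rewrite expr1; ring.
rewrite big_ord_recr /= IH; last by lia.
rewrite /Tm /dd Q_succ // (@Q_low n m); last by lia.
have e1 : (n.+1 * m.+1 + tri m.+1 = (n * m.+1 + tri m.+1) + m.+1)%N by simpl; nia.
have e2 : (n.+1 * m.+2 + tri m.+1 = (n * m.+1 + tri m.+1) + m.+1 + n.+1)%N by simpl; nia.
have e3 : (n.+1 * m.+1 + tri m = (n * m.+1 + tri m.+1))%N by simpl; nia.
rewrite e1 e2 e3 !exprD !exprS; ring.
Qed.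

Lemma S_succ n : S n.+1 = S n + dd n n + Tm n.+1 n.+1.
Proof.
rewrite /S big_ord_recr /=; congr (_ + _).
have -> : \sum_(k < n.+1) Tm n.+1 k = \sum_(k < n.+1) Tm n k + \sum_(k < n.+1) (Tm n.+1 k - Tm n k).
  by rewrite -big_split /=; apply: eq_bigr => k _; ring.
by rewrite tele.
Qed.

Lemma S_V n : S n = V n.
Proof.
elim: n => [|n IH].
  by rewrite /S /V big_ord1 big_ord0 /Tm Q_nn /= expr0 !mulr1 addr0.
rewrite S_succ IH /V big_ord_recr /= -!addrA; congr (_ + _); congr (_ + _).
rewrite /dd /Tm !Q_nn !mulr1 -mulrDr; congr (_ * _).
by rewrite addrC.
Qed.

Lemma pent_inj a b (sa sb : bool) : (0 < a)%N -> (0 < b)%N ->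
  ((if sa then 3 * a * a + a else 3 * a * a - a) =
   (if sb then 3 * b * b + b else 3 * b * b - b))%N -> a = b /\ sa = sb.
Proof.
move=> ha hb.
case: sa; case: sb => /= e; (have [lt|ge] := ltnP a b;
  [have : (a.+1 * a.+1 <= b * b)%N by apply: leq_mul|];
  [ | have [lt'|ge'] := ltnP b a;
      [have : (b.+1 * b.+1 <= a * a)%N by apply: leq_mul|]]); try nia.
Qed.

Lemma peq1 m j : (m == j.+1 * j.+1 + tri j.+1)%N = (m.*2 == 3 * j.+1 * j.+1 + j.+1)%N.
Proof. have := tri2 j.+1; move=> h; apply/eqP/eqP; nia. Qed.

Lemma peq2 m j : (m == j.+1 * j.+1 + tri j)%N = (m.*2 == 3 * j.+1 * j.+1 - j.+1)%N.
Proof. have := tri2 j; move=> h; apply/eqP/eqP; nia. Qed.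

Lemma coef_sign k (p : {poly int}) i : ((-1) ^+ k * p)`_i = (-1) ^+ k * p`_i.
Proof.
have -> : ((-1) ^+ k : {poly int}) = ((-1) ^+ k)%:P by rewrite rmorphXn rmorphN1.
by rewrite coefCM.
Qed.

Lemma E_S n : eqt n (E n) (S n).
Proof.
rewrite /S big_ord_recl /Tm /= muln0 addn0 expr0 !mul1r.
have -> : E n = Q n 0 + 0 by rewrite addr0 /E /Q big_mkord.
apply: eqtD => //; apply: eqt_sym; apply: (@eqt_trans _ _ (\sum_(i < n) 0)).
  apply: eqt_sum => i _; rewrite mulrC mulrA mulrC; apply: eqt_XnM.
  have : (n <= n * bump 0 i)%N by apply: leq_pmulr.
  rewrite /=; lia.
by rewrite big1.
Qed.

Lemma pent_hit m k j (sa : bool) : (0 < k)%N ->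
  ((m.*2 == 3 * k * k + k) || (m.*2 == 3 * k * k - k))%N ->
  (m.*2 == if sa then 3 * j.+1 * j.+1 + j.+1 else 3 * j.+1 * j.+1 - j.+1)%N -> j.+1 = k.
Proof.
move=> kp /orP [] /eqP h /eqP e.
  by case: (@pent_inj j.+1 k sa true isT kp) => //; rewrite -e h.
by case: (@pent_inj j.+1 k sa false isT kp) => //; rewrite -e h.
Qed.

Lemma V_coef n m : (m <= n)%N -> (V n)`_m = omega m.
Proof.
move=> mn.
rewrite /V coefD coef1 coef_sum.
under eq_bigr do rewrite coef_sign coefD !coefXn peq1 peq2.
rewrite /omega.
have [->|mpos] := posnP m.
  rewrite big1 ?addr0 // => j _.
  have -> : (0.*2 == 3 * j.+1 * j.+1 + j.+1)%N = false by apply/negbTE/eqP; nia.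
  have -> : (0.*2 == 3 * j.+1 * j.+1 - j.+1)%N = false by apply/negbTE/eqP; nia.
  by rewrite addr0 mulr0.

rewrite add0r.
case: pickP => [k /andP [kpos hk] | hnone].
  have kle : (k <= m)%N by rewrite -ltnS (ltn_ord k).
  have hj0 : (k.-1 < n)%N by lia.
  rewrite (bigD1 (Ordinal hj0)) //= big1 ?addr0.
    rewrite prednK //.
    case/orP: hk => /eqP h; rewrite h eqxx.
      have -> : (3 * k * k + k == 3 * k * k - k)%N = false by apply/negbTE/eqP; nia.
      by rewrite addr0 mulr1.
    have -> : (3 * k * k - k == 3 * k * k + k)%N = false by apply/negbTE/eqP; nia.
    by rewrite add0r mulr1.
  move=> j hj.
  have ne : j.+1 <> k.
    move=> e; move/negP: hj; apply; apply/eqP/val_inj => /=; lia.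
  have -> : (m.*2 == 3 * j.+1 * j.+1 + j.+1)%N = false.
    by apply/negbTE/negP => h; apply: ne; apply: (@pent_hit m k j true).
  have -> : (m.*2 == 3 * j.+1 * j.+1 - j.+1)%N = false.
    by apply/negbTE/negP => h; apply: ne; apply: (@pent_hit m k j false).
  by rewrite addr0 mulr0.
rewrite big1 // => j _.
have H : forall (sa : bool),
    (m.*2 == if sa then 3 * j.+1 * j.+1 + j.+1 else 3 * j.+1 * j.+1 - j.+1)%N = false.
  move=> sa; apply/negbTE/negP => h.
  have hjm : (j.+1 <= m)%N by case: sa h => /= /eqP h; nia.
  have := hnone (inord j.+1); rewrite /= inordK; last by lia.
  by case: sa h => /= ->; rewrite ?orbT.
have := H true; have := H false; rewrite /= => -> ->.
by rewrite addr0 mulr0.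
Qed.
Arguments eqt_trans {N p q r}.
Arguments eqtM {N p q p' q'}.
Arguments eqt_le {N N' p q}.
Arguments eqt_sym {N p q}.

Lemma level_gen (X Pp Tt : nat -> {poly int}) n k : (k <= n)%N ->
  (forall M, eqt M (X M) (Pp M * Tt M)) ->
  (forall M M', (M <= M')%N -> eqt M (Pp M) (Pp M')) ->
  (forall M M', (M <= M')%N -> eqt M (Tt M) (Tt M')) ->
  (X k)`_k = (X n)`_k.
Proof.
move=> kn hX hP hT.
have h : eqt k (X k) (X n).
  apply: (eqt_trans (hX k)); apply: (eqt_trans (eqtM (hP k n kn) (hT k n kn))).
  exact: (eqt_le kn (eqt_sym (hX n))).
exact: h.
Qed.

Lemma conv_sum n (a b : nat -> int) (Xp Y : {poly int}) :
  (forall k, (k <= n)%N -> a k = Xp`_k) -> (forall k, (k <= n)%N -> b k = Y`_k) ->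
  a 0%N = 0 ->
  \sum_(1 <= k < n.+1) a k * b (n - k)%N = (Xp * Y)`_n.
Proof.
move=> ha hb h0.
rewrite coefM -(big_mkord predT (fun j => Xp`_j * Y`_(n - j))) (big_ltn (ltn0Sn n)).
rewrite -ha // h0 mul0r add0r.
apply: eq_big_nat => k /andP [k1 kn].
by rewrite ha ?hb //; lia.
Qed.

Lemma c0_h1 j : (0 < j)%N -> c0 0%N j = 0.
Proof. by move=> hj; rewrite /c0 /=; have -> : (j == 0)%N = false by lia. Qed.
Lemma c0_h2 i : (0 < i)%N -> c0 i 0%N = 1.
Proof. by move=> hi; rewrite /c0 orbT. Qed.
Lemma c1_h1 j : (0 < j)%N -> c1 0%N j = 0.
Proof. by move=> hj; rewrite /c1 /=; have -> : (j == 0)%N = false by lia. Qed.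
Lemma c1_h2 i : (0 < i)%N -> c1 i 0%N = 1.
Proof. by move=> hi; rewrite /c1 orbT. Qed.
Lemma co_h1 j : (0 < j)%N -> co 0%N j = 0.
Proof. by move=> hj; rewrite /co /=; have -> : (j == 0)%N = false by lia. Qed.
Lemma co_h2 i : (0 < i)%N -> co i 0%N = 1.
Proof. by move=> hi; rewrite /co orbT /= muln0 expr0 mulr1. Qed.

Definition Ap M := \sum_(i0 < M.+1) gprod M (cw i0).
Definition Bp M := \sum_(i0 < M.+1) gprod M (c1w i0).

Lemma Np_A n k : (k <= n)%N -> (Np k)%:Z = (Ap n)`_k.
Proof.
move=> kn; rewrite Np_gprod -coef_sum.
apply: (@level_gen Ap (fun M => gprod M c0) (fun M => TT M (fun _ => 1))) => //.
- exact: A_eq.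
- by move=> M M' le; apply: gprod_level => //; [exact: c0_h1 | exact: c0_h2].
- by move=> M M' le; apply: TT_level.
Qed.

Lemma Nq_B n k : (k <= n)%N -> (Nq k)%:Z = (Bp n)`_k.
Proof.
move=> kn; rewrite Nq_gprod -coef_sum.
apply: (@level_gen Bp (fun M => gprod M c1) (fun M => TT M (fun j => (-1) ^+ j))) => //.
- exact: B_eq.
- by move=> M M' le; apply: gprod_level => //; [exact: c1_h1 | exact: c1_h2].
- by move=> M M' le; apply: TT_level.
Qed.

Lemma Np0 : Np 0 = 0%N.
Proof. by rewrite /Np big1 // => m /andP [/eqP h _]; rewrite /nparts big_ord1 h. Qed.
Lemma Nq0 : Nq 0 = 0%N.
Proof. by rewrite /Nq big1 // => m /andP [/andP [/eqP h _] _]; rewrite /nparts big_ord1 h. Qed.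

Theorem corollary5 (n : nat) (hn : (0 < n)%N) :
  (\sum_(1 <= k < n.+1) (Np k)%:Z * omega (n - k) = (tau n)%:Z) /\
  (\sum_(1 <= k < n.+1) (-1) ^+ (n - k) * (Nq k)%:Z * (o (n - k))%:Z = taus n).
Proof.
split.
  rewrite (@conv_sum n (fun k => (Np k)%:Z) omega (Ap n) (E n)).
  - have h : eqt n (Ap n * E n) (TT n (fun _ => 1)).
      apply: (eqt_trans (eqtM (A_eq n) (eqt_refl n (E n)))).
      rewrite mulrAC -[X in eqt _ _ X]mul1r; apply: eqtM => //; exact: PE.
    rewrite h // TT_coef //= /tau -sum1_size -natz natr_sum.
    by [].
  - exact: Np_A.
  - by move=> k kn; rewrite -(@V_coef n k kn) -S_V (@E_S n k kn).
  - by rewrite Np0.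
under eq_big_nat => k _ do rewrite [_ * (Nq k)%:Z]mulrC -mulrA.
rewrite (@conv_sum n (fun k => (Nq k)%:Z) (fun t => (-1) ^+ t * (o t)%:Z) (Bp n) (gprod n co)).
- have h : eqt n (Bp n * gprod n co) (TT n (fun j => (-1) ^+ j)).
    apply: (eqt_trans (eqtM (B_eq n) (eqt_refl n _))).
    rewrite mulrAC -[X in eqt _ _ X]mul1r; apply: eqtM => //; exact: DH.
  by rewrite h // TT_coef.
- exact: Nq_B.
- move=> k kn; rewrite -o_gprod; apply: gprod_level => //; [exact: co_h1 | exact: co_h2].
- by rewrite Nq0.
Qed.
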